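(* Let $N\in\mathbb N$, $\Sigma_N=\{1,\ldots,N\}^{\mathbb Z}$ with the shift $\sigma$, $I=[0,1]$, and let $f_1,\ldots,f_N\colon I\to f_i(I)\subset I$ be $C^1$-diffeomorphisms onto their images. Let $F\colon\Sigma_N\times I\to\Sigma_N\times I$, $F(\xi,p)=(\sigma(\xi),f_{\xi_0}(p))$, and let $\Lambda=\bigcap_{n\ge0}F^n(\Sigma_N\times I)$. Then for every $F$-invariant hyperbolic set $H\subset\Lambda$ there exists $M\ge1$ such that $\#H_\xi\le M$ for all $\xi\in\Sigma_N$, where $H_\xi:=\Pi_2(H\cap(\{\xi\}\times I))$.
   Context: $\Pi_2\colon\Sigma_N\times I\to I$ is the projection onto the second coordinate. For $k\le m$ write $f_{\xi_k\ldots\xi_m}:=f_{\xi_m}\circ\cdots\circ f_{\xi_k}$. On $\Lambda$ the map $F$ is invertible, with $F^{-1}(\xi,p)=(\sigma^{-1}(\xi),f_{\xi_{-1}}^{-1}(p))$. A set $H\subset\Lambda$ is hyperbolic with fiber contraction if there are $c>0$ and $0<\lambda<1$ with $|(f_{\xi_0\ldots\xi_{n-1}})'(p)|\le c\lambda^n$ for all $n\ge1$ and all $(\xi,p)\in H$. It is hyperbolic with fiber expansion if it is hyperbolic with fiber contraction with respect to $F^{-1}$, i.e. the analogous bound holds for the derivatives of the fiber components of $F^{-n}$ restricted to $\Lambda$. $H$ is hyperbolic if it is hyperbolic with fiber contraction or with fiber expansion. *)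

(* Defs.v *)
From Stdlib Require Import Reals ZArith List.
Open Scope R_scope.

Definition I (x : R) : Prop := 0 <= x <= 1.

(** Symbol sequences: Sigma_N = {0,...,N-1}^Z (alphabet relabelled from {1..N}). *)
Definition seqZ := Z -> nat.
Definition SigmaN (N : nat) (xi : seqZ) : Prop := forall k : Z, (xi k < N)%nat.

Definition shift (xi : seqZ) : seqZ := fun k => xi (k + 1)%Z.
Definition shift_inv (xi : seqZ) : seqZ := fun k => xi (k - 1)%Z.
Definition shift_invn (n : nat) (xi : seqZ) : seqZ := fun k => xi (k - Z.of_nat n)%Z.

Definition deriv_within (D : R -> Prop) (g : R -> R) (x l : R) : Prop :=
  forall eps, 0 < eps -> exists delta, 0 < delta /\
    forall y, D y -> y <> x -> Rabs (y - x) < delta ->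
      Rabs ((g y - g x) / (y - x) - l) < eps.

Definition continuous_within (D : R -> Prop) (h : R -> R) (x : R) : Prop :=
  forall eps, 0 < eps -> exists delta, 0 < delta /\
    forall y, D y -> Rabs (y - x) < delta -> Rabs (h y - h x) < eps.

Definition C1_on (D : R -> Prop) (h : R -> R) : Prop :=
  exists dh : R -> R,
    (forall x, D x -> deriv_within D h x (dh x)) /\
    (forall x, D x -> continuous_within D dh x).

Definition image (h : R -> R) (D : R -> Prop) (y : R) : Prop :=
  exists x, D x /\ h x = y.

Definition C1_diffeo_onto_image (h hinv : R -> R) : Prop :=
  (forall x, I x -> I (h x)) /\
  C1_on I h /\
  C1_on (image h I) hinv /\
  (forall x, I x -> hinv (h x) = x) /\
  (forall y, image h I y -> h (hinv y) = y).

Definition F (f : nat -> R -> R) (z : seqZ * R) : seqZ * R :=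
  (shift (fst z), f (fst z 0%Z) (snd z)).
Definition Fn (f : nat -> R -> R) (n : nat) (z : seqZ * R) : seqZ * R :=
  Nat.iter n (F f) z.

(** F^{-1}(xi,p) = (sigma^{-1} xi, f_{xi_{-1}}^{-1} p) (valid on Lambda), iterates. *)
Definition Finv (g : nat -> R -> R) (z : seqZ * R) : seqZ * R :=
  (shift_inv (fst z), g (fst z (-1)%Z) (snd z)).
Definition Finvn (g : nat -> R -> R) (n : nat) (z : seqZ * R) : seqZ * R :=
  Nat.iter n (Finv g) z.

Definition Lambda (N : nat) (f : nat -> R -> R) (z : seqZ * R) : Prop :=
  forall n : nat, exists y : seqZ * R,
    SigmaN N (fst y) /\ I (snd y) /\ Fn f n y = z.

Fixpoint fcomp (f : nat -> R -> R) (xi : seqZ) (n : nat) (p : R) : R :=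
  match n with
  | O => p
  | S m => f (xi (Z.of_nat m)) (fcomp f xi m p)
  end.

Definition F_invariant (f : nat -> R -> R) (H : seqZ * R -> Prop) : Prop :=
  (forall z, H z -> H (F f z)) /\
  (forall w, H w -> exists z, H z /\ F f z = w).

Definition hyp_contraction (f : nat -> R -> R) (H : seqZ * R -> Prop) : Prop :=
  exists c lam : R, 0 < c /\ 0 < lam < 1 /\
    forall (n : nat) (xi : seqZ) (p : R), (1 <= n)%nat -> H (xi, p) ->
      exists D, deriv_within I (fcomp f xi n) p D /\ Rabs D <= c * lam ^ n.

(** Hyperbolic with fibre expansion: fibre contraction for F^{-1}.  The fibre
    component of F^{-n} over xi is q |-> f_{xi_{-n}}^{-1} o ... o f_{xi_{-1}}^{-1} q,
    whose natural domain is f_{xi_{-n} ... xi_{-1}}(I). *)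
Definition hyp_expansion (f g : nat -> R -> R) (H : seqZ * R -> Prop) : Prop :=
  exists c lam : R, 0 < c /\ 0 < lam < 1 /\
    forall (n : nat) (xi : seqZ) (p : R), (1 <= n)%nat -> H (xi, p) ->
      exists D,
        deriv_within (image (fcomp f (shift_invn n xi) n) I)
                     (fun q => snd (Finvn g n (xi, q))) p D
        /\ Rabs D <= c * lam ^ n.

Definition hyperbolic (f g : nat -> R -> R) (H : seqZ * R -> Prop) : Prop :=
  hyp_contraction f H \/ hyp_expansion f g H.

Definition card_le (A : R -> Prop) (M : nat) : Prop :=
  forall l : list R, NoDup l -> (forall x, In x l -> A x) -> (length l <= M)%nat.

Definition fibre (H : seqZ * R -> Prop) (xi : seqZ) (p : R) : Prop :=
  H (xi, p) /\ I p.

(* Main.v *)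
Require Import Defs.
From Stdlib Require Import Reals ZArith List Lra Lia ClassicalEpsilon FunctionalExtensionality.
Open Scope R_scope.

Definition clamp (x : R) : R := Rmax 0 (Rmin 1 x).

Lemma clamp_I x : I (clamp x).
Proof. unfold clamp, I, Rmax, Rmin; repeat destruct Rle_dec; lra. Qed.

Lemma clamp_id x : I x -> clamp x = x.
Proof. unfold clamp, I, Rmax, Rmin; intros; repeat destruct Rle_dec; lra. Qed.

Lemma clamp_lip x y : Rabs (clamp y - clamp x) <= Rabs (y - x).
Proof. unfold clamp, Rmax, Rmin; repeat destruct Rle_dec; split_Rabs; lra. Qed.

Lemma cw_ext (h : R -> R) :
  (forall x, I x -> continuous_within I h x) ->
  forall x, continuity_pt (fun t => h (clamp t)) x.
Proof.
  intros Hc x eps Heps.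
  destruct (Hc (clamp x) (clamp_I x) eps Heps) as [d [Hd Hd']].
  exists d; split; [lra|].
  intros y [_ Hy]. simpl in *. unfold R_dist in *.
  apply Hd'. apply clamp_I. pose proof (clamp_lip x y); lra.
Qed.

Lemma cw_ext_cont (h : R -> R) :
  (forall x, I x -> continuous_within I h x) ->
  continuity (fun t => h (clamp t)).
Proof. intros Hc x; now apply cw_ext. Qed.

Lemma deriv_cont A h x l : deriv_within A h x l -> continuous_within A h x.
Proof.
  intros Hd eps Heps.
  destruct (Hd 1 Rlt_0_1) as [d1 [Hd1 H1]].
  exists (Rmin d1 (eps / (Rabs l + 1))).
  assert (Hp : 0 < eps / (Rabs l + 1)).
  { apply Rdiv_lt_0_compat; [lra| pose proof (Rabs_pos l); lra]. }
  split. { apply Rmin_glb_lt; lra. }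
  intros y Ay Hy.
  destruct (Req_dec y x) as [->|Hne].
  { rewrite Rminus_diag, Rabs_R0; lra. }
  assert (Hy1 : Rabs (y - x) < d1) by (eapply Rlt_le_trans; [exact Hy| apply Rmin_l]).
  assert (Hy2 : Rabs (y - x) < eps / (Rabs l + 1)) by (eapply Rlt_le_trans; [exact Hy| apply Rmin_r]).
  specialize (H1 y Ay Hne Hy1).
  assert (Hq : Rabs ((h y - h x) / (y - x)) <= Rabs l + 1).
  { pose proof (Rabs_triang_inv ((h y - h x) / (y - x)) l). lra. }
  assert (Heq : h y - h x = ((h y - h x) / (y - x)) * (y - x)).
  { field. lra. }
  rewrite Heq, Rabs_mult.
  assert (Hyx : 0 < Rabs (y - x)) by (apply Rabs_pos_lt; lra).
  apply Rle_lt_trans with ((Rabs l + 1) * Rabs (y - x)).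
  { apply Rmult_le_compat_r; lra. }
  assert (Hl : 0 < Rabs l + 1) by (pose proof (Rabs_pos l); lra).
  apply (Rmult_lt_compat_l (Rabs l + 1)) in Hy2; [|lra].
  replace ((Rabs l + 1) * (eps / (Rabs l + 1))) with eps in Hy2 by (field; lra).
  lra.
Qed.

Lemma deriv_interior h c l : 0 < c < 1 -> deriv_within I h c l ->
  derivable_pt_lim (fun t => h (clamp t)) c l.
Proof.
  intros Hc Hd eps Heps.
  destruct (Hd eps Heps) as [d [Hdp Hd']].
  assert (Hm : 0 < Rmin d (Rmin c (1 - c))).
  { repeat apply Rmin_glb_lt; lra. }
  exists (mkposreal _ Hm). simpl. intros k Hk Hkd.
  assert (Hk1 : Rabs k < d) by (eapply Rlt_le_trans; [exact Hkd| apply Rmin_l]).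
  assert (Hk2 : Rabs k < Rmin c (1 - c)) by (eapply Rlt_le_trans; [exact Hkd| apply Rmin_r]).
  assert (Hk3 : Rabs k < c) by (eapply Rlt_le_trans; [exact Hk2| apply Rmin_l]).
  assert (Hk4 : Rabs k < 1 - c) by (eapply Rlt_le_trans; [exact Hk2| apply Rmin_r]).
  assert (HI : I (c + k)) by (unfold I; split_Rabs; lra).
  rewrite (clamp_id (c + k) HI), (clamp_id c) by (unfold I; lra).
  replace k with ((c + k) - c) at 2 by ring.
  apply Hd'; auto.
  - lra.
  - replace (c + k - c) with k by ring. exact Hk1.
Qed.

Lemma MVT_I h dh : (forall t, I t -> deriv_within I h t (dh t)) ->
  forall x y, I x -> I y -> exists c, I c /\ Rmin x y <= c <= Rmax x y /\
     h y - h x = dh c * (y - x).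
Proof.
  intros Hd.
  assert (Hcw : forall x, I x -> continuous_within I h x).
  { intros x Hx; eapply deriv_cont; eauto. }
  assert (key : forall x y, I x -> I y -> x < y -> exists c, x < c < y /\ h y - h x = dh c * (y - x)).
  { intros x y Hx Hy Hxy.
    set (hc := fun t => h (clamp t)).
    assert (pr1 : forall c, x < c < y -> derivable_pt hc c).
    { intros c Hc. exists (dh c). apply deriv_interior.
      - unfold I in *; lra.
      - apply Hd. unfold I in *; lra. }
    assert (pr2 : forall c, x < c < y -> derivable_pt id c).
    { intros c _; apply derivable_pt_id. }
    destruct (MVT hc id x y pr1 pr2 Hxy) as [c [P HP]].
    { intros c _; apply cw_ext; auto. }
    { intros c _; apply derivable_continuous_pt, derivable_pt_id. }
    exists c; split; [exact P|].
    rewrite (derive_pt_eq_0 hc c (dh c) (pr1 c P)) in HP.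
    2:{ apply deriv_interior. unfold I in *; lra. apply Hd. unfold I in *; lra. }
    rewrite (derive_pt_eq_0 id c 1 (pr2 c P)) in HP.
    2:{ apply derivable_pt_lim_id. }
    unfold hc, id in HP. rewrite !clamp_id in HP by assumption.
    lra. }
  intros x y Hx Hy.
  destruct (Rtotal_order x y) as [Hlt|[Heq|Hgt]].
  - destruct (key x y Hx Hy Hlt) as [c [Hc Hc']].
    exists c. rewrite Rmin_left, Rmax_right by lra.
    split; [unfold I in *; lra|]. split; [lra|exact Hc'].
  - subst. exists y. rewrite Rmin_left, Rmax_right by lra.
    split; [auto|]. split; [lra|ring].
  - destruct (key y x Hy Hx Hgt) as [c [Hc Hc']].
    exists c. rewrite Rmin_right, Rmax_left by lra.
    split; [unfold I in *; lra|]. split; [lra|lra].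
Qed.

Lemma IVT_I h : (forall t, I t -> continuous_within I h t) ->
  forall a b v, I a -> I b -> a <= b -> (h a - v) * (h b - v) <= 0 ->
  exists t, a <= t <= b /\ h t = v.
Proof.
  intros Hc a b v Ha Hb Hab Hv.
  set (k := fun t => h (clamp t) - v).
  assert (Hk : continuity k).
  { unfold k. apply continuity_minus. apply cw_ext_cont; auto. apply continuity_const. intros ? ?; auto. }
  destruct (IVT_cor k a b Hk Hab) as [t [Ht Ht']].
  { unfold k. rewrite !clamp_id by auto. exact Hv. }
  exists t; split; auto. unfold k in Ht'.
  rewrite clamp_id in Ht' by (unfold I in *; lra). lra.
Qed.

Lemma unif_I h : (forall t, I t -> continuous_within I h t) ->
  forall eps, 0 < eps -> exists d, 0 < d /\ forall x y, I x -> I y -> Rabs (x - y) < d ->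
    Rabs (h x - h y) < eps.
Proof.
  intros Hc eps Heps.
  destruct (Heine_cor2 (f := fun t => h (clamp t)) (a := 0) (b := 1)
             (fun x _ => cw_ext h Hc x) (mkposreal eps Heps)) as [d Hd].
  exists d. split. apply cond_pos.
  intros x y Hx Hy Hxy. specialize (Hd x y Hx Hy Hxy). simpl in Hd.
  rewrite !clamp_id in Hd by auto. exact Hd.
Qed.

Lemma bound_I h : (forall t, I t -> continuous_within I h t) ->
  exists B, 0 <= B /\ forall x, I x -> Rabs (h x) <= B.
Proof.
  intros Hc.
  assert (Hc' : forall t, I t -> continuous_within I (fun x => Rabs (h x)) t).
  { intros t Ht eps Heps. destruct (Hc t Ht eps Heps) as [d [Hd Hd']].
    exists d; split; auto. intros y Hy Hyd.
    specialize (Hd' y Hy Hyd).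
    eapply Rle_lt_trans; [apply Rabs_triang_inv2| exact Hd']. }
  destruct (continuity_ab_maj (fun t => Rabs (h (clamp t))) 0 1 ltac:(lra)
    (fun c _ => cw_ext _ Hc' c)) as [M [HM _]].
  exists (Rabs (h (clamp M))). split. apply Rabs_pos.
  intros x Hx. specialize (HM x Hx). simpl in HM. rewrite clamp_id in HM by auto. exact HM.
Qed.

Lemma deriv_unique h x a b : I x -> deriv_within I h x a -> deriv_within I h x b -> a = b.
Proof.
  intros Hx Ha Hb.
  destruct (Req_dec a b) as [|Hne]; auto. exfalso.
  assert (He : 0 < Rabs (a - b) / 2) by (apply Rdiv_lt_0_compat; [apply Rabs_pos_lt; lra| lra]).
  destruct (Ha _ He) as [d1 [Hd1 H1]].
  destruct (Hb _ He) as [d2 [Hd2 H2]].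
  set (s := Rmin (Rmin d1 d2) (1/2) / 2).
  assert (Hs : 0 < s).
  { unfold s. apply Rdiv_lt_0_compat; [repeat apply Rmin_glb_lt; lra| lra]. }
  assert (Hs1 : s < d1).
  { unfold s. pose proof (Rmin_l (Rmin d1 d2) (1/2)). pose proof (Rmin_l d1 d2). lra. }
  assert (Hs2 : s < d2).
  { unfold s. pose proof (Rmin_l (Rmin d1 d2) (1/2)). pose proof (Rmin_r d1 d2). lra. }
  assert (Hs3 : s <= 1/4).
  { unfold s. pose proof (Rmin_r (Rmin d1 d2) (1/2)). lra. }
  assert (exists y, I y /\ y <> x /\ Rabs (y - x) = s) as [y [Hy [Hyx Hys]]].
  { unfold I in Hx. destruct (Rle_dec x (1/2)).
    - exists (x + s). split; [unfold I; lra|]. split; [lra|].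
      replace (x + s - x) with s by ring. apply Rabs_right; lra.
    - exists (x - s). split; [unfold I; lra|]. split; [lra|].
      replace (x - s - x) with (- s) by ring. rewrite Rabs_Ropp. apply Rabs_right; lra. }
  specialize (H1 y Hy Hyx ltac:(lra)). specialize (H2 y Hy Hyx ltac:(lra)).
  set (q := (h y - h x) / (y - x)) in *.
  assert (Rabs (a - b) <= Rabs (q - b) + Rabs (q - a)).
  { replace (a - b) with ((q - b) - (q - a)) by ring.
    eapply Rle_trans; [apply Rabs_triang|]. rewrite Rabs_Ropp. lra. }
  lra.
Qed.

Lemma deriv_ext A h1 h2 x l : (forall t, A t -> h1 t = h2 t) -> A x ->
  deriv_within A h1 x l -> deriv_within A h2 x l.
Proof.
  intros He Ax Hd eps Heps. destruct (Hd eps Heps) as [d [Hd1 Hd2]].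
  exists d; split; auto. intros y Ay Hyx Hy.
  rewrite <- (He y Ay), <- (He x Ax). auto.
Qed.

Lemma deriv_id A x : deriv_within A (fun t => t) x 1.
Proof.
  intros eps Heps. exists 1; split; [lra|]. intros y _ Hyx _.
  replace ((y - x) / (y - x) - 1) with 0 by (field; lra).
  rewrite Rabs_R0; lra.
Qed.

Lemma deriv_chain A B h k x a b :
  deriv_within A h x a -> deriv_within B k (h x) b -> (forall t, A t -> B (h t)) ->
  deriv_within A (fun t => k (h t)) x (b * a).
Proof.
  intros Hh Hk HAB eps Heps.
  assert (Ha1 : 0 < Rabs a + 1) by (pose proof (Rabs_pos a); lra).
  assert (Hb1 : 0 < Rabs b + 1) by (pose proof (Rabs_pos b); lra).
  set (ek := eps / (2 * (Rabs a + 1))).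
  set (eh := Rmin 1 (eps / (2 * (Rabs b + 1)))).
  assert (Hek : 0 < ek) by (unfold ek; apply Rdiv_lt_0_compat; lra).
  assert (Heh0 : 0 < eps / (2 * (Rabs b + 1))) by (apply Rdiv_lt_0_compat; lra).
  assert (Heh : 0 < eh) by (unfold eh; apply Rmin_glb_lt; lra).
  assert (Heh1 : eh <= 1) by apply Rmin_l.
  assert (Heh2 : eh <= eps / (2 * (Rabs b + 1))) by apply Rmin_r.
  destruct (Hk ek Hek) as [dk [Hdk Hk']].
  destruct (deriv_cont _ _ _ _ Hh dk Hdk) as [dc [Hdc Hc']].
  destruct (Hh eh Heh) as [dh [Hdh Hh']].
  exists (Rmin dc dh). split; [apply Rmin_glb_lt; lra|].
  intros t At Htx Ht.
  assert (Ht1 : Rabs (t - x) < dc) by (eapply Rlt_le_trans; [exact Ht| apply Rmin_l]).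
  assert (Ht2 : Rabs (t - x) < dh) by (eapply Rlt_le_trans; [exact Ht| apply Rmin_r]).
  specialize (Hh' t At Htx Ht2). specialize (Hc' t At Ht1).
  set (q := (h t - h x) / (t - x)) in *.
  assert (Hq : Rabs q <= Rabs a + 1).
  { pose proof (Rabs_triang_inv q a). lra. }
  assert (Hbq : Rabs b * Rabs (q - a) <= Rabs b * eh).
  { apply Rmult_le_compat_l; [apply Rabs_pos|lra]. }
  assert (Hbe : Rabs b * eh < eps / 2).
  { apply Rle_lt_trans with (Rabs b * (eps / (2 * (Rabs b + 1)))).
    - apply Rmult_le_compat_l; [apply Rabs_pos|lra].
    - apply Rmult_lt_reg_r with (2 * (Rabs b + 1)); [lra|].
      replace (Rabs b * (eps / (2 * (Rabs b + 1))) * (2 * (Rabs b + 1))) with (Rabs b * eps) by (field; lra).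
      replace (eps / 2 * (2 * (Rabs b + 1))) with (Rabs b * eps + eps) by field. lra. }
  destruct (Req_dec (h t) (h x)) as [Heq|Hne].
  - assert (q = 0) by (unfold q; rewrite Heq; field; lra).
    replace ((k (h t) - k (h x)) / (t - x) - b * a) with (b * (q - a)).
    2:{ rewrite Heq. rewrite H. field. lra. }
    rewrite Rabs_mult. lra.
  - specialize (Hk' (h t) (HAB t At) Hne Hc').
    set (r := (k (h t) - k (h x)) / (h t - h x)) in *.
    replace ((k (h t) - k (h x)) / (t - x) - b * a) with ((r - b) * q + b * (q - a)).
    2:{ unfold r, q. field. split; lra. }
    eapply Rle_lt_trans; [apply Rabs_triang|]. rewrite !Rabs_mult.
    assert (Rabs (r - b) * Rabs q <= ek * (Rabs a + 1)).
    { apply Rmult_le_compat; try apply Rabs_pos; lra. }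
    assert (ek * (Rabs a + 1) = eps / 2) by (unfold ek; field; lra).
    lra.
Qed.

Lemma min_dist_one (x : R) (l : list R) : ~ In x l ->
  exists e, 0 < e /\ forall y, In y l -> e <= Rabs (x - y).
Proof.
  induction l as [|a l IH]; intros Hn.
  - exists 1; split; [lra|]. intros y [].
  - assert (Hxa : x <> a) by (intro; apply Hn; left; auto).
    destruct IH as [e [He He']]. { intro; apply Hn; right; auto. }
    exists (Rmin e (Rabs (x - a))). split.
    + apply Rmin_glb_lt; auto. apply Rabs_pos_lt; lra.
    + intros y [<-|Hy].
      * apply Rmin_r.
      * eapply Rle_trans; [apply Rmin_l| auto].
Qed.

Lemma min_dist (l : list R) : NoDup l ->
  exists d, 0 < d /\ forall x y, In x l -> In y l -> x <> y -> d <= Rabs (x - y).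
Proof.
  induction l as [|a l IH]; intros Hnd.
  - exists 1; split; [lra|]. intros x y [].
  - apply NoDup_cons_iff in Hnd as [Hna Hnd].
    destruct (IH Hnd) as [d [Hd Hd']].
    destruct (min_dist_one a l Hna) as [e [He He']].
    exists (Rmin d e). split; [apply Rmin_glb_lt; auto|].
    intros x y [<-|Hx] [<-|Hy] Hxy.
    + congruence.
    + eapply Rle_trans; [apply Rmin_r| auto].
    + rewrite Rabs_minus_sym. eapply Rle_trans; [apply Rmin_r| auto].
    + eapply Rle_trans; [apply Rmin_l| auto].
Qed.

Lemma pow_le_one (r : R) n : 0 <= r <= 1 -> r ^ n <= 1.
Proof.
  intros Hr. induction n; simpl; [lra|].
  pose proof (pow_le r n ltac:(lra)).
  apply Rle_trans with (1 * r ^ n). apply Rmult_le_compat_r; lra. lra.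
Qed.

Section Finish.
Variable H : seqZ * R -> Prop.
Variable Rl : seqZ * R -> seqZ * R -> Prop.
Variables delta rho : R.
Hypothesis Hdelta : 0 < delta.
Hypothesis Hrho : 0 <= rho < 1.
Hypothesis HI : forall z, H z -> I (snd z).
Hypothesis Hb : forall w, H w -> exists z, H z /\ Rl z w.
Hypothesis Hf : forall z1 z2 w1 w2, H z1 -> H z2 -> H w1 -> H w2 -> Rl z1 w1 -> Rl z2 w2 ->
  fst w1 = fst w2 -> fst z1 = fst z2.
Hypothesis Hc : forall z1 z2 w1 w2, H z1 -> H z2 -> H w1 -> H w2 -> Rl z1 w1 -> Rl z2 w2 ->
  fst z1 = fst z2 -> fst w1 = fst w2 -> Rabs (snd z1 - snd z2) < delta ->
  Rabs (snd w1 - snd w2) <= rho * Rabs (snd z1 - snd z2).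

Definition pre (w : seqZ * R) : seqZ * R := epsilon (inhabits w) (fun z => H z /\ Rl z w).

Lemma pre_spec w : H w -> H (pre w) /\ Rl (pre w) w.
Proof. intros Hw. unfold pre. apply epsilon_spec. auto. Qed.

Definition pren (n : nat) (w : seqZ * R) := Nat.iter n pre w.

Lemma pren_H n w : H w -> H (pren n w).
Proof.
  revert w; induction n; intros w Hw; [exact Hw|].
  unfold pren. rewrite Nat.iter_succ_r. apply IHn. apply pre_spec; auto.
Qed.

Lemma pren_fst n w1 w2 : H w1 -> H w2 -> fst w1 = fst w2 -> fst (pren n w1) = fst (pren n w2).
Proof.
  revert w1 w2; induction n; intros w1 w2 H1 H2 E; [exact E|].
  unfold pren. rewrite !Nat.iter_succ_r.
  destruct (pre_spec w1 H1) as [P1 R1], (pre_spec w2 H2) as [P2 R2].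
  apply IHn; [exact P1|exact P2|]. eapply Hf; [exact P1|exact P2|exact H1|exact H2|exact R1|exact R2|exact E].
Qed.

Lemma pren_contr n w1 w2 : H w1 -> H w2 -> fst w1 = fst w2 ->
  Rabs (snd (pren n w1) - snd (pren n w2)) < delta ->
  Rabs (snd w1 - snd w2) <= rho ^ n * Rabs (snd (pren n w1) - snd (pren n w2)).
Proof.
  revert w1 w2; induction n; intros w1 w2 H1 H2 E D.
  - simpl. lra.
  - unfold pren in *. rewrite !Nat.iter_succ_r in *.
    destruct (pre_spec w1 H1) as [P1 R1], (pre_spec w2 H2) as [P2 R2].
    assert (Ef : fst (pre w1) = fst (pre w2)) by (eapply Hf; [exact P1|exact P2|exact H1|exact H2|exact R1|exact R2|exact E]).
    specialize (IHn _ _ P1 P2 Ef D).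
    set (X := Rabs (snd (Nat.iter n pre (pre w1)) - snd (Nat.iter n pre (pre w2)))) in *.
    assert (Hp : rho ^ n <= 1) by (apply pow_le_one; lra).
    assert (HX : 0 <= X) by apply Rabs_pos.
    assert (Hlt : Rabs (snd (pre w1) - snd (pre w2)) < delta).
    { eapply Rle_lt_trans; [exact IHn|].
      eapply Rle_lt_trans; [|exact D]. apply Rle_trans with (1 * X); [|lra].
      apply Rmult_le_compat_r; lra. }
    pose proof (Hc _ _ _ _ P1 P2 H1 H2 R1 R2 Ef E Hlt) as HH.
    simpl. rewrite Rmult_assoc.
    eapply Rle_trans; [exact HH|]. apply Rmult_le_compat_l; lra.
Qed.

Lemma finish : exists M : nat, (1 <= M)%nat /\ forall xi : seqZ, card_le (fibre H xi) M.
Proof.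
  destruct (archimed_cor1 delta Hdelta) as [K [HK HK0]].
  assert (HKp : 0 < INR K) by (apply lt_0_INR; lia).
  exists (S K). split; [lia|].
  intros xi l Hnd Hl.
  destruct (min_dist l Hnd) as [d [Hd Hd']].
  destruct (pow_lt_1_zero rho ltac:(rewrite Rabs_right; lra) d Hd) as [n Hn].
  specialize (Hn n (le_n n)). rewrite Rabs_right in Hn by (apply Rle_ge, pow_le; lra).
  set (a := fun x => snd (pren n (xi, x))).
  set (bin := fun x => Z.to_nat (Int_part (a x * INR K))).
  assert (Ha : forall x, In x l -> H (xi, x) /\ I (a x) /\ H (pren n (xi, x))).
  { intros x Hx. destruct (Hl x Hx) as [Hx1 Hx2].
    pose proof (pren_H n _ Hx1). split; auto. split; auto. apply HI; auto. }
  assert (Hip : forall r, 0 <= r -> (0 <= Int_part r)%Z).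
  { intros r Hr. destruct (base_Int_part r) as [_ B].
    assert (-1 < Int_part r)%Z by (apply lt_IZR; lra). lia. }
  assert (Hpairs : ForallPairs (fun x y => bin x = bin y -> x = y) l).
  { intros x y Hx Hy Hbin.
    destruct (Req_dec x y) as [|Hne]; auto. exfalso.
    destruct (Ha x Hx) as [Hx1 [Hx2 Hx3]], (Ha y Hy) as [Hy1 [Hy2 Hy3]].
    unfold I in Hx2, Hy2.
    assert (Ei : Int_part (a x * INR K) = Int_part (a y * INR K)).
    { apply Z2Nat.inj; auto; apply Hip; apply Rmult_le_pos; lra. }
    destruct (base_Int_part (a x * INR K)) as [B1 B2].
    destruct (base_Int_part (a y * INR K)) as [B3 B4].
    rewrite Ei in B1, B2.
    assert (Hab : Rabs (a x - a y) * INR K < 1).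
    { rewrite <- (Rabs_right (INR K)) by lra. rewrite <- Rabs_mult.
      rewrite Rmult_minus_distr_r. split_Rabs; lra. }
    assert (Hab2 : Rabs (a x - a y) < / INR K).
    { apply Rmult_lt_reg_r with (INR K); auto. rewrite Rinv_l by lra. lra. }
    assert (Hfx : fst (xi, x) = fst (xi, y)) by reflexivity.
    pose proof (pren_contr n (xi, x) (xi, y) Hx1 Hy1 Hfx ltac:(unfold a in Hab2; lra)) as Hc'.
    fold (a x) (a y) in Hc'. simpl in Hc'.
    specialize (Hd' x y Hx Hy Hne).
    assert (Rabs (a x - a y) <= 1) by (split_Rabs; lra).
    assert (rho ^ n * Rabs (a x - a y) <= rho ^ n).
    { apply Rle_trans with (rho ^ n * 1); [|lra]. apply Rmult_le_compat_l; [apply pow_le; lra| lra]. }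
    lra. }
  pose proof (NoDup_map_NoDup_ForallPairs bin Hpairs Hnd) as Hnd2.
  assert (Hincl : incl (map bin l) (seq 0 (S K))).
  { intros b Hb'. apply in_map_iff in Hb' as [x [<- Hx]].
    apply in_seq. destruct (Ha x Hx) as [_ [Hx2 _]]. unfold I in Hx2.
    destruct (base_Int_part (a x * INR K)) as [B1 B2].
    assert (IZR (Int_part (a x * INR K)) <= IZR (Z.of_nat K)).
    { rewrite <- INR_IZR_INZ. apply Rle_trans with (a x * INR K); auto.
      apply Rle_trans with (1 * INR K); [apply Rmult_le_compat_r|]; lra. }
    apply le_IZR in H0. unfold bin. lia. }
  pose proof (NoDup_incl_length Hnd2 Hincl).
  rewrite length_map, length_seq in H0. exact H0.
Qed.
End Finish.

Lemma fin_delta (P : nat -> R -> Prop) N :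
  (forall i d d', P i d -> 0 < d' -> d' <= d -> P i d') ->
  (forall i, (i < N)%nat -> exists d, 0 < d /\ P i d) ->
  exists d, 0 < d /\ forall i, (i < N)%nat -> P i d.
Proof.
  intros Hm. induction N; intros Hi.
  - exists 1; split; [lra|]. intros; lia.
  - destruct IHN as [d [Hd Hd']]. { intros i Hi'; apply Hi; lia. }
    destruct (Hi N ltac:(lia)) as [e [He He']].
    exists (Rmin d e). split; [apply Rmin_glb_lt; auto|].
    intros i Hi'. destruct (Nat.eq_dec i N) as [->|Hne].
    + eapply Hm; [exact He'| apply Rmin_glb_lt; auto| apply Rmin_r].
    + eapply Hm; [apply Hd'; lia| apply Rmin_glb_lt; auto| apply Rmin_l].
Qed.

Lemma fin_bound (P : nat -> R -> Prop) N :
  (forall i B B', P i B -> B <= B' -> P i B') ->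
  (forall i, (i < N)%nat -> exists B, P i B) ->
  exists B, 0 <= B /\ forall i, (i < N)%nat -> P i B.
Proof.
  intros Hm. induction N; intros Hi.
  - exists 0; split; [lra|]. intros; lia.
  - destruct IHN as [d [Hd Hd']]. { intros i Hi'; apply Hi; lia. }
    destruct (Hi N ltac:(lia)) as [e He'].
    exists (Rmax d e). split; [eapply Rle_trans; [exact Hd| apply Rmax_l]|].
    intros i Hi'. destruct (Nat.eq_dec i N) as [->|Hne].
    + eapply Hm; [exact He'| apply Rmax_r].
    + eapply Hm; [apply Hd'; lia| apply Rmax_l].
Qed.

Lemma abs_sep u v w : Rabs (w - u) < Rabs (v - u) -> (u - w)*(v - w) <= 0 \/ (v - u)*(w - u) <= 0.
Proof. intros. destruct (Rle_dec ((u-w)*(v-w)) 0); [left; auto| right]. split_Rabs; nra. Qed.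

Lemma sep h : (forall t, I t -> continuous_within I h t) ->
  (forall a b, I a -> I b -> h a = h b -> a = b) ->
  forall x y z e, I x -> I y -> I z -> ((x <= z <= y) \/ (y <= z <= x)) -> z <> x ->
  e <= Rabs (h z - h x) -> Rabs (h y - h x) < e -> False.
Proof.
  intros Hc Hinj x y z e Ix Iy Iz Hz Hzx He Hy.
  destruct (Req_dec y z) as [->|Hyz]; [lra|].
  assert (Hlt : Rabs (h y - h x) < Rabs (h z - h x)) by lra.
  destruct (abs_sep (h x) (h z) (h y) Hlt) as [C|C].
  -
    destruct Hz as [Hz|Hz].
    + destruct (IVT_I h Hc x z (h y) Ix Iz ltac:(lra) ltac:(nra)) as [t [Ht Ht']].
      assert (t = y) by (apply Hinj; auto; unfold I in *; lra). lra.
    + destruct (IVT_I h Hc z x (h y) Iz Ix ltac:(lra) ltac:(nra)) as [t [Ht Ht']].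
      assert (t = y) by (apply Hinj; auto; unfold I in *; lra). lra.
  - destruct Hz as [Hz|Hz].
    + destruct (IVT_I h Hc z y (h x) Iz Iy ltac:(lra) ltac:(nra)) as [t [Ht Ht']].
      assert (t = x) by (apply Hinj; auto; unfold I in *; lra). lra.
    + destruct (IVT_I h Hc y z (h x) Iy Iz ltac:(lra) ltac:(nra)) as [t [Ht Ht']].
      assert (t = x) by (apply Hinj; auto; unfold I in *; lra). lra.
Qed.

Definition shiftn (n : nat) (xi : seqZ) : seqZ := fun k => xi (k + Z.of_nat n)%Z.

Lemma shiftn_inj n a b : shiftn n a = shiftn n b -> a = b.
Proof.
  intros E. apply functional_extensionality. intros k.
  pose proof (equal_f E (k - Z.of_nat n)%Z) as E'. unfold shiftn in E'.
  replace (k - Z.of_nat n + Z.of_nat n)%Z with k in E' by lia. exact E'.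
Qed.

Lemma shift_invn_shiftn n a : shift_invn n (shiftn n a) = a.
Proof.
  apply functional_extensionality. intros k. unfold shift_invn, shiftn.
  f_equal. lia.
Qed.

Lemma SigmaN_shiftn N n a : SigmaN N a -> SigmaN N (shiftn n a).
Proof. intros Ha k. apply Ha. Qed.

Lemma Fn_eq f n a p : Fn f n (a, p) = (shiftn n a, fcomp f a n p).
Proof.
  induction n.
  - simpl. f_equal. apply functional_extensionality; intros k. unfold shiftn. f_equal; lia.
  - change (Fn f (S n) (a, p)) with (F f (Fn f n (a, p))). rewrite IHn.
    unfold F. simpl. f_equal.
    + apply functional_extensionality; intros k. unfold Defs.shift, shiftn. f_equal; lia.
Qed.

Section Dyn.
Variable N : nat.
Variables f g : nat -> R -> R.
Hypothesis Hdiffeo : forall i : nat, (i < N)%nat -> C1_diffeo_onto_image (f i) (g i).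

Definition df (i : nat) : R -> R :=
  epsilon (inhabits (fun _ : R => 0)) (fun dh => (forall x, I x -> deriv_within I (f i) x (dh x)) /\
     (forall x, I x -> continuous_within I dh x)).

Lemma df_spec i : (i < N)%nat -> (forall x, I x -> deriv_within I (f i) x (df i x)) /\
     (forall x, I x -> continuous_within I (df i) x).
Proof.
  intros Hi. unfold df. apply epsilon_spec. destruct (Hdiffeo i Hi) as [_ [[dh Hdh] _]].
  exists dh; exact Hdh.
Qed.

Lemma f_I i x : (i < N)%nat -> I x -> I (f i x).
Proof. intros Hi Hx. destruct (Hdiffeo i Hi) as [A _]. auto. Qed.

Lemma gf i x : (i < N)%nat -> I x -> g i (f i x) = x.
Proof. intros Hi Hx. destruct (Hdiffeo i Hi) as [_ [_ [_ [A _]]]]. auto. Qed.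

Lemma unif_df : forall eps, 0 < eps -> exists d, 0 < d /\ forall i, (i < N)%nat ->
  forall x y, I x -> I y -> Rabs (x - y) < d -> Rabs (df i x - df i y) < eps.
Proof.
  intros eps Heps.
  apply (fin_delta (fun i d => forall x y, I x -> I y -> Rabs (x - y) < d -> Rabs (df i x - df i y) < eps)).
  - intros i d d' Hd Hd' Hdd x y Hx Hy Hxy. apply Hd; auto; lra.
  - intros i Hi. apply unif_I; auto. apply df_spec; auto.
Qed.

Lemma bound_df : exists B, 0 <= B /\ forall i, (i < N)%nat -> forall x, I x -> Rabs (df i x) <= B.
Proof.
  apply (fin_bound (fun i B => forall x, I x -> Rabs (df i x) <= B)).
  - intros i B B' HB HBB x Hx. specialize (HB x Hx). lra.
  - intros i Hi. destruct (bound_I (df i) (proj2 (df_spec i Hi))) as [B [_ HB]]. eauto.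
Qed.

Lemma fcomp_I a m x : SigmaN N a -> I x -> I (fcomp f a m x).
Proof. intros Ha Hx. induction m; simpl; auto. apply f_I; auto. Qed.

Fixpoint dFc (m : nat) (a : seqZ) (x : R) : R :=
  match m with
  | O => 1
  | S k => df (a (Z.of_nat k)) (fcomp f a k x) * dFc k a x
  end.

Lemma Good m :
  (forall a x, SigmaN N a -> I x -> deriv_within I (fcomp f a m) x (dFc m a x)) /\
  (forall eps, 0 < eps -> exists d, 0 < d /\ forall a x y, SigmaN N a -> I x -> I y ->
      Rabs (x - y) < d -> Rabs (dFc m a x - dFc m a y) < eps) /\
  (exists B, 0 <= B /\ forall a x, SigmaN N a -> I x -> Rabs (dFc m a x) <= B).
Proof.
  induction m as [|m [IH1 [IH2 [Bm [HBm HBm']]]]].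
  - split; [|split].
    + intros a x _ _. simpl. apply deriv_id.
    + intros eps Heps. exists 1; split; [lra|]. intros. simpl.
      rewrite Rminus_diag, Rabs_R0; auto.
    + exists 1; split; [lra|]. intros. simpl. rewrite Rabs_R1; lra.
  - destruct bound_df as [Bf [HBf HBf']].
    split; [|split].
    + intros a x Ha Hx. simpl.
      apply (deriv_chain I I (fcomp f a m) (f (a (Z.of_nat m)))); auto.
      * apply df_spec; auto. apply fcomp_I; auto.
      * intros t Ht. apply fcomp_I; auto.
    + intros eps Heps.
      assert (HBm1 : 0 < Bm + 1) by lra.
      assert (HBf1 : 0 < Bf + 1) by lra.
      destruct (unif_df (eps / (2 * (Bm + 1)))) as [d1 [Hd1 Hd1']].
      { apply Rdiv_lt_0_compat; lra. }
      destruct (IH2 (eps / (2 * (Bf + 1)))) as [d2 [Hd2 Hd2']].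
      { apply Rdiv_lt_0_compat; lra. }
      exists (Rmin d2 (d1 / (Bm + 1))). split.
      { apply Rmin_glb_lt; auto. apply Rdiv_lt_0_compat; lra. }
      intros a x y Ha Hx Hy Hxy.
      assert (Hxy2 : Rabs (x - y) < d2) by (eapply Rlt_le_trans; [exact Hxy|apply Rmin_l]).
      assert (Hxy1 : Rabs (x - y) < d1 / (Bm + 1)) by (eapply Rlt_le_trans; [exact Hxy|apply Rmin_r]).
      simpl.
      set (u := fcomp f a m x). set (u' := fcomp f a m y).
      assert (Hu : Rabs (u - u') < d1).
      { destruct (MVT_I (fcomp f a m) (dFc m a) (fun t Ht => IH1 a t Ha Ht) y x Hy Hx) as [c [Hc [_ Hc']]].
        unfold u, u'. rewrite Hc', Rabs_mult.
        apply Rle_lt_trans with (Bm * Rabs (x - y)).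
        { apply Rmult_le_compat_r; [apply Rabs_pos| auto]. }
        apply Rle_lt_trans with ((Bm + 1) * Rabs (x - y)).
        { pose proof (Rabs_pos (x - y)). nra. }
        apply Rmult_lt_reg_r with (/ (Bm + 1)). apply Rinv_0_lt_compat; lra.
        replace ((Bm + 1) * Rabs (x - y) * / (Bm + 1)) with (Rabs (x - y)) by (field; lra).
        replace (d1 * / (Bm + 1)) with (d1 / (Bm + 1)) by (unfold Rdiv; ring). exact Hxy1. }
      assert (Iu : I u) by (apply fcomp_I; auto).
      assert (Iu' : I u') by (apply fcomp_I; auto).
      assert (Hi : (a (Z.of_nat m) < N)%nat) by apply Ha.
      specialize (Hd1' _ Hi u u' Iu Iu' Hu).
      specialize (Hd2' a x y Ha Hx Hy Hxy2).
      set (A := dFc m a x) in *. set (A' := dFc m a y) in *.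
      set (D := df (a (Z.of_nat m)) u) in *. set (D' := df (a (Z.of_nat m)) u') in *.
      replace (D * A - D' * A') with ((D - D') * A + D' * (A - A')) by ring.
      eapply Rle_lt_trans; [apply Rabs_triang|]. rewrite !Rabs_mult.
      assert (E1 : Rabs (D - D') * Rabs A <= eps / (2 * (Bm + 1)) * Bm).
      { apply Rmult_le_compat; try apply Rabs_pos; try lra. apply HBm'; auto. }
      assert (E2 : Rabs D' * Rabs (A - A') <= Bf * (eps / (2 * (Bf + 1)))).
      { apply Rmult_le_compat; try apply Rabs_pos; try lra. apply HBf'; auto. }
      assert (E3 : eps / (2 * (Bm + 1)) * Bm <= eps / 2).
      { apply Rmult_le_reg_r with (2 * (Bm + 1)); [lra|].
        replace (eps / (2 * (Bm + 1)) * Bm * (2 * (Bm + 1))) with (eps * Bm) by (field; lra).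
        replace (eps / 2 * (2 * (Bm + 1))) with (eps * Bm + eps) by field. lra. }
      assert (E4 : Bf * (eps / (2 * (Bf + 1))) < eps / 2).
      { apply Rmult_lt_reg_r with (2 * (Bf + 1)); [lra|].
        replace (Bf * (eps / (2 * (Bf + 1))) * (2 * (Bf + 1))) with (eps * Bf) by (field; lra).
        replace (eps / 2 * (2 * (Bf + 1))) with (eps * Bf + eps) by field. lra. }
      lra.
    + exists (Bf * Bm). split; [apply Rmult_le_pos; auto|].
      intros a x Ha Hx. simpl. rewrite Rabs_mult.
      apply Rmult_le_compat; try apply Rabs_pos.
      * apply HBf'; [apply Ha| apply fcomp_I; auto].
      * apply HBm'; auto.
Qed.

End Dyn.

Section Main.
Variable N : nat.
Variables f g : nat -> R -> R.
Hypothesis Hdiffeo : forall i : nat, (i < N)%nat -> C1_diffeo_onto_image (f i) (g i).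
Variable H : seqZ * R -> Prop.
Hypothesis HinLambda : forall z, H z -> Lambda N f z.
Hypothesis Hinv : F_invariant f H.

Lemma H_Sig z : H z -> SigmaN N (fst z) /\ I (snd z).
Proof.
  intros Hz. destruct (HinLambda z Hz 0%nat) as [y [Hy1 [Hy2 Hy3]]].
  simpl in Hy3. subst. auto.
Qed.

Lemma H_Fn n z : H z -> H (Fn f n z).
Proof.
  intros Hz. induction n; [exact Hz|].
  change (Fn f (S n) z) with (F f (Fn f n z)). apply (proj1 Hinv); auto.
Qed.

Lemma H_back n w : H w -> exists z, H z /\ Fn f n z = w.
Proof.
  revert w; induction n; intros w Hw.
  - exists w; auto.
  - destruct (proj2 Hinv w Hw) as [y [Hy Hyw]].
    destruct (IHn y Hy) as [z [Hz Hzy]].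
    exists z; split; auto. change (Fn f (S n) z) with (F f (Fn f n z)). congruence.
Qed.

Lemma Finv_F a t : SigmaN N a -> I t -> Finv g (F f (a, t)) = (a, t).
Proof.
  intros Ha Ht. unfold Finv, F. simpl. f_equal.
  - apply functional_extensionality; intros k. unfold shift_inv, Defs.shift. f_equal. lia.
  - unfold Defs.shift. simpl. apply (gf N f g Hdiffeo); auto.
Qed.

Lemma Finvn_Fn n a t : SigmaN N a -> I t -> Finvn g n (Fn f n (a, t)) = (a, t).
Proof.
  intros Ha Ht. induction n; [reflexivity|].
  change (Fn f (S n) (a, t)) with (F f (Fn f n (a, t))).
  unfold Finvn. rewrite Nat.iter_succ_r.
  rewrite (Fn_eq f n a t) at 1. rewrite Finv_F.
  - rewrite <- Fn_eq. exact IHn.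
  - apply SigmaN_shiftn; auto.
  - apply (fcomp_I N f g Hdiffeo); auto.
Qed.

Lemma choose_m c lam : 0 < c -> 0 < lam < 1 -> exists m, (1 <= m)%nat /\ c * lam ^ m <= 1/2.
Proof.
  intros Hc Hl.
  destruct (pow_lt_1_zero lam ltac:(rewrite Rabs_right; lra) (/ (2 * c))) as [n0 Hn0].
  { apply Rinv_0_lt_compat; lra. }
  exists (S n0). split; [lia|].
  specialize (Hn0 (S n0) ltac:(lia)). rewrite Rabs_right in Hn0 by (apply Rle_ge, pow_le; lra).
  apply Rmult_lt_compat_l with (r := c) in Hn0; auto.
  replace (c * / (2 * c)) with (1/2) in Hn0 by (field; lra). lra.
Qed.

Lemma between_abs p q c : Rmin p q <= c <= Rmax p q -> Rabs (c - p) <= Rabs (q - p).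
Proof. unfold Rmin, Rmax; destruct Rle_dec; intros; split_Rabs; lra. Qed.

Lemma case_contr : hyp_contraction f H ->
  exists M : nat, (1 <= M)%nat /\ forall xi : seqZ, card_le (fibre H xi) M.
Proof.
  intros [c [lam [Hc [Hlam Hd]]]].
  destruct (choose_m c lam Hc Hlam) as [m [Hm1 Hm2]].
  destruct (Good N f g Hdiffeo m) as [G1 [G2 _]].
  destruct (G2 (1/4) ltac:(lra)) as [d0 [Hd0 Hd0']].
  apply (finish H (fun z w => w = Fn f m z) d0 (3/4)); [lra|lra| | | |].
  - intros z Hz. apply H_Sig; auto.
  - intros w Hw. destruct (H_back m w Hw) as [z [Hz Hzw]]. eauto.
  - intros [a1 p1] [a2 p2] w1 w2 _ _ _ _ R1 R2 E. subst w1 w2.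
    rewrite !Fn_eq in E. simpl in E |- *. apply (shiftn_inj m); exact E.
  - intros [a1 p1] [a2 p2] w1 w2 H1 H2 _ _ R1 R2 E _ D. subst w1 w2.
    simpl in E, D. subst a2. rewrite !Fn_eq. simpl.
    destruct (H_Sig _ H1) as [Ha Ip1]. destruct (H_Sig _ H2) as [_ Ip2]. simpl in *.
    destruct (Hd m a1 p1 Hm1 H1) as [D0 [HD0 HD0b]].
    assert (E0 : D0 = dFc f m a1 p1) by (apply (deriv_unique (fcomp f a1 m) p1); [exact Ip1| exact HD0| apply G1; auto]).
    subst D0.
    destruct (MVT_I (fcomp f a1 m) (dFc f m a1) (fun t Ht => G1 a1 t Ha Ht) p1 p2 Ip1 Ip2)
      as [c0 [Ic0 [Bc0 Ec0]]].
    rewrite <- Rabs_Ropp, Ropp_minus_distr, Ec0, Rabs_mult.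
    pose proof (between_abs _ _ _ Bc0) as Hb.
    assert (Hc0 : Rabs (c0 - p1) < d0) by (rewrite Rabs_minus_sym in D; lra).
    specialize (Hd0' a1 c0 p1 Ha Ic0 Ip1 Hc0).
    assert (Rabs (dFc f m a1 c0) <= 3/4).
    { pose proof (Rabs_triang_inv (dFc f m a1 c0) (dFc f m a1 p1)). lra. }
    rewrite (Rabs_minus_sym p2 p1).
    apply Rmult_le_compat_r; [apply Rabs_pos| auto].
Qed.

Lemma case_exp : hyp_expansion f g H ->
  exists M : nat, (1 <= M)%nat /\ forall xi : seqZ, card_le (fibre H xi) M.
Proof.
  intros [c [lam [Hc [Hlam Hd]]]].
  destruct (choose_m c lam Hc Hlam) as [m [Hm1 Hm2]].
  destruct (Good N f g Hdiffeo m) as [G1 [G2 _]].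
  destruct (G2 (1/2) ltac:(lra)) as [d0 [Hd0 Hd0']].
  set (s := d0 / 2).
  assert (Hs : 0 < s) by (unfold s; lra).
  apply (finish H (fun z w => z = Fn f m w) (3/2 * s) (2/3)); [lra|lra| | | |].
  - intros z Hz. apply H_Sig; auto.
  - intros w Hw. exists (Fn f m w). split; auto. apply H_Fn; auto.
  - intros z1 z2 [a1 p1] [a2 p2] _ _ _ _ R1 R2 E. subst z1 z2.
    rewrite !Fn_eq. simpl in *. congruence.
  - intros z1 z2 [a1 p1] [a2 p2] Hz1 Hz2 H1 H2 R1 R2 _ Ew D. subst z1 z2.
    simpl in Ew. subst a2. rewrite !Fn_eq in *. simpl in D |- *.
    destruct (H_Sig _ H1) as [Ha Ip1]. destruct (H_Sig _ H2) as [_ Ip2]. simpl in *.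
    set (h := fcomp f a1 m) in *.
    set (dF := dFc f m a1) in *.
    set (P := fun q => snd (Finvn g m (shiftn m a1, q))).
    assert (HP : forall t, I t -> P (h t) = t).
    { intros t It. unfold P, h. rewrite <- (Fn_eq f m a1 t), Finvn_Fn; auto. }
    destruct (Hd m (shiftn m a1) (h p1) Hm1 Hz1) as [D0 [HD0 HD0b]].
    rewrite shift_invn_shiftn in HD0. fold h in HD0. fold P in HD0.
    assert (HG1 : forall t, I t -> deriv_within I h t (dF t)) by (intros; apply G1; auto).
    pose proof (deriv_chain I (image h I) h P p1 (dF p1) D0 (HG1 p1 Ip1) HD0
      (fun t Ht => ex_intro _ t (conj Ht eq_refl))) as Hch.
    apply (deriv_ext _ _ (fun t => t)) in Hch; [|intros; apply HP; auto| auto].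
    pose proof (deriv_unique _ _ _ _ Ip1 Hch (deriv_id I p1)) as E1.
    assert (Hbig : 2 <= Rabs (dF p1)).
    { assert (Rabs (D0 * dF p1) = 1) by (rewrite E1; apply Rabs_R1).
      rewrite Rabs_mult in H0. pose proof (Rabs_pos (dF p1)). nra. }
    assert (Hnear : forall t, I t -> Rabs (t - p1) < d0 -> 3/2 <= Rabs (dF t)).
    { intros t It Ht. specialize (Hd0' a1 t p1 Ha It Ip1 Ht). fold dF in Hd0'.
      pose proof (Rabs_triang_inv (dF p1) (dF t)). rewrite Rabs_minus_sym in Hd0'. lra. }
    assert (Hinj : forall x y, I x -> I y -> h x = h y -> x = y).
    { intros x y Ix Iy E. rewrite <- (HP x Ix), <- (HP y Iy), E. reflexivity. }
    assert (Hcont : forall t, I t -> continuous_within I h t).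
    { intros t It. eapply deriv_cont. apply HG1; auto. }
    assert (Hclose : Rabs (p2 - p1) < s).
    { destruct (Rlt_le_dec (Rabs (p2 - p1)) s) as [|Hge]; auto. exfalso.
      assert (exists z, I z /\ ((p1 <= z <= p2) \/ (p2 <= z <= p1)) /\ Rabs (z - p1) = s) as [z [Iz [Bz Ez]]].
      { unfold I in *. destruct (Rle_dec p1 p2).
        - exists (p1 + s). rewrite Rabs_right in Hge by lra.
          replace (p1 + s - p1) with s by ring. rewrite Rabs_right by lra. split; [lra|]. split; [left; lra| auto].
        - exists (p1 - s). rewrite Rabs_left in Hge by lra.
          replace (p1 - s - p1) with (- s) by ring. rewrite Rabs_Ropp, Rabs_right by lra.
          split; [lra|]. split; [right; lra| auto]. }
      destruct (MVT_I h dF HG1 p1 z Ip1 Iz) as [c0 [Ic0 [Bc0 Ec0]]].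
      pose proof (between_abs _ _ _ Bc0) as Hb.
      assert (Hc0 : 3/2 <= Rabs (dF c0)) by (apply Hnear; auto; unfold s in *; lra).
      apply (sep h Hcont Hinj p1 p2 z (3/2 * s) Ip1 Ip2 Iz Bz).
      + intro; subst z. rewrite Rminus_diag, Rabs_R0 in Ez. lra.
      + rewrite Ec0, Rabs_mult, Ez. apply Rmult_le_compat_r; lra.
      + rewrite Rabs_minus_sym. exact D. }
    destruct (MVT_I h dF HG1 p2 p1 Ip2 Ip1) as [c0 [Ic0 [Bc0 Ec0]]].
    assert (Hc0 : 3/2 <= Rabs (dF c0)).
    { apply Hnear; auto. rewrite Rmin_comm, Rmax_comm in Bc0. pose proof (between_abs _ _ _ Bc0). unfold s in *; lra. }
    rewrite Ec0, Rabs_mult.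
    pose proof (Rabs_pos (p1 - p2)). nra.
Qed.

End Main.

Theorem theoremA (N : nat) (f g : nat -> R -> R)
  (Hdiffeo : forall i : nat, (i < N)%nat -> C1_diffeo_onto_image (f i) (g i))
  (H : seqZ * R -> Prop)
  (HinLambda : forall z, H z -> Lambda N f z)
  (Hinv : F_invariant f H)
  (Hhyp : hyperbolic f g H) :
  exists M : nat, (1 <= M)%nat /\
    forall xi : seqZ, SigmaN N xi -> card_le (fibre H xi) M.
Proof.
  assert (E : exists M : nat, (1 <= M)%nat /\ forall xi : seqZ, card_le (fibre H xi) M).
  { destruct Hhyp as [Hc|He].
    - eapply case_contr; eauto.
    - eapply case_exp; eauto. }
  destruct E as [M [HM HM']]. exists M; split; auto.
Qed.
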